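(* Let $\mathcal N$ be an NDCS network with parties $A_1,\dots,A_n$, let $p$ be the output distribution of a causally consistent model on $\mathcal N$ (finite output alphabets), and let $f_i$ be arbitrary complex-valued functions of the outputs $a_i$. Then for every twisted Gram matrix $W$ (for any $d$, any vectors $\ket{\psi_1},\dots,\ket{\psi_n}\in\mathbb C^d$ and any permutations $\pi_i^\alpha$), the Schur product $\mathcal C(f_1,\dots,f_n)\circ W$ is positive semidefinite.
   Context: A network $\mathcal N$ is a bipartite graph between sources $S_\alpha$ and parties $A_i$ ($i=1,\dots,n$); $\alpha\to i$ means $S_\alpha$ is adjacent to $A_i$; no isolated vertices, and no two sources with comparable sets of adjacent parties. $\mathcal N$ is NDCS if any two distinct parties have at most one common adjacent source. Covariance matrix: $\mathcal C(f_1,\dots,f_n)_{ij}=\mathbb E[\bar f_i f_j]-\mathbb E[\bar f_i]\,\mathbb E[f_j]$. The Schur product is $(M\circ N)_{ij}=M_{ij}N_{ij}$. Twisted Gram matrix: given $d$, vectors $\ket{\psi_1},\dots,\ket{\psi_n}\in\mathbb C^d$, and for every pair $(\alpha,i)$ with $\alpha\to i$ a permutation $\pi_i^\alpha$ of $\{1,\dots,d\}$ with permutation matrix $P_{\pi_i^\alpha}$ ($P_{\pi}\ket x=\ket{\pi(x)}$), a twisted Gram matrix is an $n\times n$ Hermitian matrix $W$ with $W_{ii}=\langle\psi_i|\psi_i\rangle$ and $W_{ij}=\bra{\psi_i}P_{\pi_i^\alpha}^\dagger P_{\pi_j^\alpha}\ket{\psi_j}$ whenever $i\neq j$ and $\alpha\to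 i,j$ (well-defined by NDCS); entries $W_{ij}$ with $i\neq j$ sharing no source are arbitrary (subject to $W$ being Hermitian). Non-fanout inflation of order $d\ge 2$: choose, for every pair $(\alpha,i)$ with $\alpha\to i$, a permutation $\pi_i^\alpha$ of $\{1,\dots,d\}$. The inflated network has parties $A_i^{(k)}$ and sources $S_\alpha^{(k)}$ ($1\le k\le d$), with $S_\alpha^{(k)}$ adjacent to $A_i^{((\pi_i^\alpha)^{-1}(k))}$ whenever $\alpha\to i$, and no other adjacencies. Causally consistent model on $\mathcal N$: a joint distribution $p(a_1,\dots,a_n)$ of the outputs of $\mathcal N$ together with, for every non-fanout inflation of every order $d\ge2$, a joint distribution of the outputs $a_i^{(k)}$ of its parties, such that: (C0) if $A_i\neq A_j$ share no source in $\mathcal N$, then $p(a_i,a_j)=p(a_i)p(a_j)$; (C1) in every inflation, each $a_i^{(k)}$ has marginal $p(a_i)$, and if $A_i^{(k)}$ and $A_j^{(l)}$ with $i\neq j$ share a source in the inflation, then $(a_i^{(k)},a_j^{(l)})$ has joint distribution $p(a_i,a_j)$; (C2) in every inflation, if two distinct parties share no source, the joint distribution of their outputs is the product of their marginals. *)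

(* Defs.v *)
From HB Require Import structures.
From mathcomp Require Import all_boot all_order all_algebra all_fingroup.
From mathcomp Require Import reals complex.
Set Implicit Arguments. Unset Strict Implicit. Unset Printing Implicit Defensive.
Import Order.TTheory GRing.Theory Num.Theory.
Local Open Scope ring_scope.

(* A network with m sources and n parties: adj a i <=> S_a -> A_i.          *)
Definition network (m n : nat) (adj : 'I_m -> 'I_n -> bool) : Prop :=
  [/\ (forall a : 'I_m, exists i : 'I_n, adj a i),
      (forall i : 'I_n, exists a : 'I_m, adj a i) &
      (forall a b : 'I_m, a != b -> ~ (forall i, adj a i -> adj b i))].

Definition NDCS (m n : nat) (adj : 'I_m -> 'I_n -> bool) : Prop :=
  forall (i j : 'I_n) (a b : 'I_m), i != j ->
    adj a i -> adj a j -> adj b i -> adj b j -> a = b.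

Definition share_src (m n : nat) (adj : 'I_m -> 'I_n -> bool) (i j : 'I_n) : bool :=
  [exists a, adj a i && adj a j].

(* Non-fanout inflation of order d given by permutations pi a i = pi_i^a   *)
(* (values at non-adjacent pairs are irrelevant).  Party A_i^(k) is (i,k).  *)
(* S_a^(k) is adjacent to A_i^(l) iff adj a i and pi a i l = k, so two      *)
(* inflated parties share a source iff the following holds.                 *)
Definition infl_share (m n d : nat) (adj : 'I_m -> 'I_n -> bool)
  (pi : 'I_m -> 'I_n -> {perm 'I_d}) (x y : 'I_n * 'I_d) : bool :=
  [exists a, [&& adj a x.1, adj a y.1 & pi a x.1 x.2 == pi a y.1 y.2]].

Section Dist.
Variables (R : realType) (O X : finType).

Definition is_dist (q : {ffun X -> O} -> R) : Prop :=
  (forall w, 0 <= q w) /\ \sum_w q w = 1.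

Definition marg1 (q : {ffun X -> O} -> R) (x : X) (a : O) : R :=
  \sum_(w : {ffun X -> O} | w x == a) q w.

Definition marg2 (q : {ffun X -> O} -> R) (x y : X) (a b : O) : R :=
  \sum_(w : {ffun X -> O} | (w x == a) && (w y == b)) q w.
End Dist.

Definition causally_consistent (R : realType) (O : finType) (m n : nat)
  (adj : 'I_m -> 'I_n -> bool) (p : {ffun 'I_n -> O} -> R) : Prop :=
  is_dist p /\
  (* (C0) *)
  (forall i j : 'I_n, i != j -> ~~ share_src adj i j ->
     forall a b, marg2 p i j a b = marg1 p i a * marg1 p j b) /\
  (forall d : nat, (2 <= d)%N -> forall pi : 'I_m -> 'I_n -> {perm 'I_d},
     exists q : {ffun 'I_n * 'I_d -> O} -> R,
       is_dist q /\
       (* (C1) *)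
       (forall (x : 'I_n * 'I_d) a, marg1 q x a = marg1 p x.1 a) /\
       (forall (x y : 'I_n * 'I_d), x.1 != y.1 -> infl_share adj pi x y ->
          forall a b, marg2 q x y a b = marg2 p x.1 y.1 a b) /\
       (* (C2) *)
       (forall (x y : 'I_n * 'I_d), x != y -> ~~ infl_share adj pi x y ->
          forall a b, marg2 q x y a b = marg1 q x a * marg1 q y b)).

Section Mx.
Variable R : realType.
Local Notation C := R[i].
Local Open Scope complex_scope.

Definition expect (n : nat) (O : finType) (p : {ffun 'I_n -> O} -> R)
  (g : {ffun 'I_n -> O} -> C) : C :=
  \sum_(w : {ffun 'I_n -> O}) (p w)%:C * g w.

Definition covmx (n : nat) (O : finType) (p : {ffun 'I_n -> O} -> R)
  (f : 'I_n -> O -> C) : 'M[C]_n :=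
  \matrix_(i, j) (expect p (fun w => (f i (w i))^* * f j (w j))
                  - (expect p (fun w => f i (w i)))^* * expect p (fun w => f j (w j))).

Definition schur (n : nat) (M N : 'M[C]_n) : 'M[C]_n := \matrix_(i, j) (M i j * N i j).

Definition mxadj (k l : nat) (M : 'M[C]_(k, l)) : 'M[C]_(l, k) := (map_mx Num.conj M)^T.

Definition Pmx (d : nat) (s : {perm 'I_d}) : 'M[C]_d := \matrix_(y, x) (y == s x)%:R.

Definition psd (n : nat) (M : 'M[C]_n) : Prop :=
  forall v : 'cV[C]_n, 0 <= (mxadj v *m M *m v) 0 0.

Definition hermitian (n : nat) (M : 'M[C]_n) : Prop :=
  forall i j, M j i = (M i j)^*.

Definition twisted_gram (m n d : nat) (adj : 'I_m -> 'I_n -> bool)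
  (psi : 'I_n -> 'cV[C]_d) (pi : 'I_m -> 'I_n -> {perm 'I_d}) (W : 'M[C]_n) : Prop :=
  [/\ hermitian W,
      (forall i, W i i = (mxadj (psi i) *m psi i) 0 0) &
      (forall (i j : 'I_n) (a : 'I_m), i != j -> adj a i -> adj a j ->
         W i j = (mxadj (psi i) *m mxadj (Pmx (pi a i)) *m Pmx (pi a j) *m psi j) 0 0)].
End Mx.

(* Main.v *)
Require Import Defs.
From mathcomp Require Import all_boot all_order all_algebra all_fingroup.
From mathcomp Require Import reals complex ring.
Set Implicit Arguments. Unset Strict Implicit. Unset Printing Implicit Defensive.
Import Order.TTheory GRing.Theory Num.Theory.
Local Open Scope ring_scope.
Local Open Scope complex_scope.

Section H.
Variables (R : realType) (O : finType).
Local Notation C := R[i].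

Definition Ex (X : finType) (q : {ffun X -> O} -> R) (g : {ffun X -> O} -> C) : C :=
  \sum_w (q w)%:C * g w.

Lemma conj_real (x : R) : (x%:C)^* = x%:C :> C.
Proof. by rewrite /= oppr0. Qed.

Lemma part1 (X : finType) (q : {ffun X -> O} -> R) (x : X) (h : O -> C) :
  Ex q (fun w => h (w x)) = \sum_a (marg1 q x a)%:C * h a.
Proof.
rewrite /Ex (partition_big (fun w : {ffun X -> O} => w x) xpredT) //=.
apply: eq_bigr => a _; rewrite /marg1 raddf_sum mulr_suml.
by apply: eq_bigr => w /eqP ->.
Qed.

Lemma part2 (X : finType) (q : {ffun X -> O} -> R) (x y : X) (h : O -> O -> C) :
  Ex q (fun w => h (w x) (w y)) =
  \sum_a \sum_b (marg2 q x y a b)%:C * h a b.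
Proof.
rewrite /Ex (partition_big (fun w : {ffun X -> O} => (w x, w y)) xpredT) //=.
rewrite pair_big /=; apply: eq_bigr => [[a b]] _ /=.
rewrite /marg2 raddf_sum mulr_suml.
apply: eq_big => w; first by rewrite xpair_eqE.
by rewrite xpair_eqE => /andP[/eqP -> /eqP ->].
Qed.

Lemma var_ge0 (X : finType) (q : {ffun X -> O} -> R) (hq : forall w, 0 <= q w)
  (F : X -> O -> C) (c : X -> C) :
  0 <= \sum_x \sum_y (c x)^* * c y * Ex q (fun w => (F x (w x))^* * F y (w y)).
Proof.
have -> : \sum_x \sum_y (c x)^* * c y * Ex q (fun w => (F x (w x))^* * F y (w y))
   = \sum_w (q w)%:C * ((\sum_x c x * F x (w x))^* * (\sum_y c y * F y (w y))).
  rewrite /Ex.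
  under eq_bigr => x _ do under eq_bigr => y _ do rewrite mulr_sumr.
  under eq_bigr => x _ do rewrite exchange_big.
  rewrite exchange_big; apply: eq_bigr => w _.
  rewrite rmorph_sum mulr_suml mulr_sumr; apply: eq_bigr => x _.
  rewrite mulr_sumr mulr_sumr; apply: eq_bigr => y _.
  rewrite rmorphM; ring.
apply: sumr_ge0 => w _; apply: mulr_ge0; first by rewrite ler0c.
by rewrite mulrC; apply: mulcJ_ge0.
Qed.

Lemma ind (X : finType) (q : {ffun X -> O} -> R) (x y : X) (h1 h2 : O -> C) :
  (forall a b, marg2 q x y a b = marg1 q x a * marg1 q y b) ->
  Ex q (fun w => h1 (w x) * h2 (w y)) =
  (\sum_a (marg1 q x a)%:C * h1 a) * (\sum_b (marg1 q y b)%:C * h2 b).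
Proof.
move=> H; rewrite (part2 q x y (fun a b => h1 a * h2 b)) mulr_suml.
apply: eq_bigr => a _; rewrite mulr_sumr; apply: eq_bigr => b _.
by rewrite H rmorphM /=; ring.
Qed.

Lemma Ex_one (X : finType) (q : {ffun X -> O} -> R) : is_dist q ->
  Ex q (fun _ => 1) = 1.
Proof.
case=> _ h; rewrite /Ex.
under eq_bigr do rewrite mulr1.
by rewrite -raddf_sum /= h.
Qed.

Lemma Ex_conj (X : finType) (q : {ffun X -> O} -> R) g :
  (Ex q g)^* = Ex q (fun w => (g w)^*).
Proof.
rewrite /Ex rmorph_sum; apply: eq_bigr => w _.
by rewrite rmorphM; congr (_ * _); apply: conj_real.
Qed.

Lemma Ex_center (X : finType) (q : {ffun X -> O} -> R) (g h : {ffun X -> O} -> C) :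
  is_dist q ->
  Ex q (fun w => (g w - Ex q g)^* * (h w - Ex q h)) =
  Ex q (fun w => (g w)^* * h w) - (Ex q g)^* * Ex q h.
Proof.
move=> hq.
have E : forall a b : C, Ex q (fun w => (g w - a)^* * (h w - b)) =
  Ex q (fun w => (g w)^* * h w) - a^* * Ex q h - (Ex q (fun w => (g w)^*)) * b
  + a^* * b * Ex q (fun _ => 1).
  move=> a b; rewrite /Ex !mulr_sumr mulr_suml -!sumrB -big_split /=.
  apply: eq_bigr => w _; rewrite rmorphB; ring.
by rewrite E Ex_one // -Ex_conj; ring.
Qed.


Lemma conjE (x : C) : Num.conj x = x^*. Proof. by []. Qed.

Lemma sum_if (T : finType) (k : T) (g : T -> C) (c : C) :
  \sum_l g l * (if k == l then c else 0) = g k * c.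
Proof.
rewrite (bigD1 k) //= eqxx big1 ?addr0 // => l hl.
by rewrite eq_sym (negbTE hl) mulr0.
Qed.

Lemma sum_delta (T : finType) (k : T) (g : T -> C) :
  \sum_l (k == l)%:R * g l = g k.
Proof.
rewrite (bigD1 k) //= eqxx mul1r big1 ?addr0 // => l hl.
by rewrite eq_sym (negbTE hl) mul0r.
Qed.

Lemma quad (n : nat) (M : 'M[C]_n) (v : 'cV[C]_n) :
  (mxadj v *m M *m v) 0 0 = \sum_i \sum_j (v i 0)^* * v j 0 * M i j.
Proof.
rewrite mxE exchange_big; apply: eq_bigr => j _.
rewrite mxE mulr_suml; apply: eq_bigr => i _.
rewrite !mxE conjE; ring.
Qed.

Lemma Wdiag (d : nat) (x : 'cV[C]_d) :
  (mxadj x *m x) 0 0 = \sum_k (x k 0)^* * x k 0.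
Proof. by rewrite mxE; apply: eq_bigr => k _; rewrite !mxE conjE. Qed.

Lemma Wmx (d : nat) (x y : 'cV[C]_d) (s t : {perm 'I_d}) :
  (mxadj x *m mxadj (Pmx R s) *m Pmx R t *m y) 0 0 =
  \sum_k \sum_l (s k == t l)%:R * (x k 0)^* * y l 0.
Proof.
rewrite mxE exchange_big; apply: eq_bigr => l _.
rewrite mxE mulr_suml.
under [in LHS]eq_bigr => z _ do rewrite mxE !mulr_suml.
rewrite exchange_big /=; apply: eq_bigr => k _.
under eq_bigr => z _ do rewrite !mxE conjE rmorph_nat.
transitivity (\sum_z (s k == z)%:R * ((x k 0)^* * (z == t l)%:R * y l 0)).
  by apply: eq_bigr => z _; rewrite [z == s k]eq_sym; ring.
by rewrite sum_delta; ring.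
Qed.

Lemma small_d (d : nat) (hd : (d < 2)%N) (s t : {perm 'I_d}) (x y : 'cV[C]_d) :
  \sum_k \sum_l (s k == t l)%:R * (x k 0)^* * y l 0 =
  (\sum_k x k 0)^* * \sum_k y k 0 /\
  \sum_k (x k 0)^* * y k 0 = (\sum_k x k 0)^* * \sum_k y k 0.
Proof.
case: d hd s t x y => [|[|//]] _ s t x y.
  by rewrite !big_ord0 rmorph0 mul0r.
rewrite !big_ord1 [s _]ord1 [t _]ord1 eqxx mul1r; split=> //.
Qed.

End H.

Theorem lemma6 (R : realType) (m n : nat) (adj : 'I_m -> 'I_n -> bool)
  (O : finType) (p : {ffun 'I_n -> O} -> R) (f : 'I_n -> O -> R[i])
  (d : nat) (psi : 'I_n -> 'cV[R[i]]_d) (pi : 'I_m -> 'I_n -> {perm 'I_d})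
  (W : 'M[R[i]]_n) :
  network adj -> NDCS adj -> causally_consistent adj p ->
  twisted_gram adj psi pi W ->
  psd (schur (covmx p f) W).
Proof.
move=> _ hN [hp [hC0 hinf]] [_ hWd hWo] v.
pose F := fun i a => f i a - expect p (fun w => f i (w i)).
have hcov : forall i j, covmx p f i j = Ex p (fun w => (F i (w i))^* * F j (w j)).
  move=> i j; rewrite mxE; symmetry.
  exact: (Ex_center (fun w => f i (w i)) (fun w => f j (w j)) hp).
have h1 : \sum_w (p w)%:C = 1 :> R[i].
  by rewrite -raddf_sum; case: hp => _ ->.
have hF0 : forall i, \sum_a (marg1 p i a)%:C * F i a = 0.
  move=> i; rewrite -(part1 p i (F i)) /Ex /F /expect.
  under eq_bigr => w _ do rewrite mulrBr.
  by rewrite sumrB -mulr_suml h1 mul1r subrr.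
have hCz : forall i j, i != j -> ~~ share_src adj i j -> covmx p f i j = 0.
  move=> i j hij hs; rewrite hcov.
  rewrite (ind (fun a => (F i a)^*) (F j) (hC0 i j hij hs)).
  by rewrite hF0 mulr0.
rewrite quad.
have hsh : forall (e : nat) (pe : 'I_m -> 'I_n -> {perm 'I_e}) i j k l,
    infl_share adj pe (i, k) (j, l) -> share_src adj i j.
  move=> e pe i j k l /existsP [b /and3P [hbi hbj _]].
  by apply/existsP; exists b; rewrite hbi hbj.
case: (leqP 2 d) => hd.
  have [q [hq [hm1 [hm2 hm2']]]] := hinf d hd pi.
  pose c := fun x : 'I_n * 'I_d => v x.1 0 * psi x.1 x.2 0.
  have hG : forall x y, Ex q (fun w => (F x.1 (w x))^* * F y.1 (w y)) =
      if (x == y) || ((x.1 != y.1) && infl_share adj pi x y)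
      then covmx p f x.1 y.1 else 0.
    move=> x y; case: eqP => [<-|/eqP hxy] /=.
      rewrite (part1 q x (fun a => (F x.1 a)^* * F x.1 a)).
      under eq_bigr => a _ do rewrite hm1.
      by rewrite -(part1 p x.1 (fun a => (F x.1 a)^* * F x.1 a)) hcov.
    case: ifP => hs.
      case/andP: hs => hx1 hx2.
      rewrite (part2 q x y (fun a b => (F x.1 a)^* * F y.1 b)).
      under eq_bigr => a _ do under eq_bigr => b _ do rewrite (hm2 x y hx1 hx2 a b).
      by rewrite -(part2 p x.1 y.1 (fun a b => (F x.1 a)^* * F y.1 b)) hcov.
    have hni : ~~ infl_share adj pi x y.
      case: (eqVneq x.1 y.1) hs => [e _|_ /= -> //].
      apply/negP => /existsP [b /and3P [_ _ /eqP e2]].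
      move: e2; rewrite e => /perm_inj e2.
      by move: hxy; case: x y e e2 => [x1 x2] [y1 y2] /= -> ->; rewrite eqxx.
    rewrite (ind (fun a => (F x.1 a)^*) (F y.1) (hm2' x y hxy hni)).
    under [X in _ * X = _]eq_bigr => b _ do rewrite hm1.
    by rewrite hF0 mulr0.
  have -> : \sum_i \sum_j (v i 0)^* * v j 0 * schur (covmx p f) W i j =
      \sum_x \sum_y (c x)^* * c y * Ex q (fun w => (F x.1 (w x))^* * F y.1 (w y)).
    transitivity (\sum_i \sum_j \sum_k \sum_l
       (c (i, k))^* * c (j, l) * Ex q (fun w => (F i (w (i, k)))^* * F j (w (j, l)))).
      apply: eq_bigr => i _; apply: eq_bigr => j _.
      under eq_bigr => k _ do under eq_bigr => l _ do rewrite (hG (i, k) (j, l)) /=.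
      rewrite mxE.
      case: (eqVneq i j) => [<-|hij].
        under eq_bigr => k _ do under eq_bigr => l _ do rewrite xpair_eqE eqxx /= ?andbF ?orbF.
        under eq_bigr => k _ do rewrite sum_if.
        rewrite hWd Wdiag !mulr_sumr; apply: eq_bigr => k _.
        rewrite /c /= rmorphM; ring.
      case: (boolP (share_src adj i j)) => hs; last first.
        rewrite hCz // mul0r mulr0 big1 // => k _; rewrite big1 // => l _.
        rewrite xpair_eqE (negbTE hij) /=.
        case: ifP => [/(hsh _ pi i j k l) hs2|_]; last by rewrite mulr0.
        by rewrite (negbTE hs) in hs2.
      case/existsP: hs => a /andP [hai haj].
      have hI : forall k l, infl_share adj pi (i, k) (j, l) = (pi a i k == pi a j l).
        move=> k l; apply/existsP/idP => [[b /and3P [hbi hbj /eqP e]] | e].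
          by rewrite (hN i j b a hij hbi hbj hai haj) in e; rewrite /= e.
        by exists a; rewrite /= hai haj.
      under eq_bigr => k _ do under eq_bigr => l _ do
        rewrite xpair_eqE (negbTE hij) /= hI.
      rewrite (hWo i j a hij hai haj) Wmx !mulr_sumr; apply: eq_bigr => k _.
      rewrite !mulr_sumr; apply: eq_bigr => l _.
      by case: (_ == _); rewrite /c /= rmorphM; ring.
    under eq_bigr => i _ do rewrite exchange_big.
    under eq_bigr => i _ do under eq_bigr => k _ do rewrite (pair_big xpredT xpredT (fun j l => (c (i, k))^* * c (j, l) * Ex q (fun w => (F i (w (i, k)))^* * F j (w (j, l))))).
    rewrite (pair_big xpredT xpredT (fun i k => \sum_y (c (i, k))^* * c (y.1, y.2) * Ex q (fun w => (F i (w (i, k)))^* * F y.1 (w (y.1, y.2))))).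
    apply: eq_bigr => [[i k]] _; apply: eq_bigr => [[j l]] _ //.
  by case: hq => hq0 _; exact: (var_ge0 hq0 (fun x a => F x.1 a) c).
pose cc := fun i => v i 0 * \sum_k psi i k 0.
have -> : \sum_i \sum_j (v i 0)^* * v j 0 * schur (covmx p f) W i j =
    \sum_i \sum_j (cc i)^* * cc j * Ex p (fun w => (F i (w i))^* * F j (w j)).
  apply: eq_bigr => i _; apply: eq_bigr => j _.
  rewrite -hcov mxE.
  case: (eqVneq i j) => [<-|hij].
    rewrite hWd Wdiag (small_d hd 1%g 1%g (psi i) (psi i)).2 /cc rmorphM; ring.
  case: (boolP (share_src adj i j)) => hs; last by rewrite hCz // !(mul0r, mulr0).
  case/existsP: hs => a /andP [hai haj].
  rewrite (hWo i j a hij hai haj) Wmx (small_d hd _ _ (psi i) (psi j)).1 /cc rmorphM; ring.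
by case: hp => hp0 _; exact: (var_ge0 hp0 F cc).
Qed.
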